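(* Every cutoff is a rational number.
   Context: For a real number $\alpha\ge 1$, define the integer sequence $(P^\alpha_i)_{i\ge 0}$ by $P^\alpha_0=0$, $P^\alpha_1=1$, and for $k\ge 1$, $P^\alpha_{k+1}=P^\alpha_k+P^\alpha_j$, where $j\ge1$ is the unique index with $\alpha P^\alpha_{j-1}<P^\alpha_k\le \alpha P^\alpha_j$. A cutoff is a real number $\alpha\ge 1$ such that for every real $\beta$ with $1\le\beta<\alpha$, the sequences $(P^\alpha_i)$ and $(P^\beta_i)$ are not identical. *)

(* Defs.v *)
From HB Require Import structures.
From mathcomp Require Import all_boot all_order all_algebra.
From mathcomp Require Import reals.
Set Implicit Arguments. Unset Strict Implicit. Unset Printing Implicit Defensive.
Import Order.TTheory GRing.Theory Num.Theory.
Local Open Scope ring_scope.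

Section PSeq.
Variable R : realType.
Variable alpha : R.

(* Given s = [:: P_0; ...; P_k] (k >= 1), the index j >= 1 with
   alpha * P_{j-1} < P_k <= alpha * P_j (the first one in 1..k; it is
   unique whenever alpha >= 1). *)
Definition P_index (s : seq nat) : nat :=
  let k := (size s).-1 in
  let pk := nth 0%N s k in
  (find (fun j => (alpha * (nth 0%N s j.-1)%:R < pk%:R) &&
                  (pk%:R <= alpha * (nth 0%N s j)%:R))
        (iota 1 k)).+1.

Definition P_step (s : seq nat) : seq nat :=
  rcons s (nth 0%N s (size s).-1 + nth 0%N s (P_index s))%N.

(* [:: P_0; ...; P_{n+1}] *)
Fixpoint P_list (n : nat) : seq nat :=
  match n with
  | 0 => [:: 0%N; 1%N]
  | n'.+1 => P_step (P_list n')
  end.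

Definition Pseq (i : nat) : nat := nth 0%N (P_list i) i.
End PSeq.

Definition cutoff (R : realType) (alpha : R) : Prop :=
  1 <= alpha /\
  forall beta : R, 1 <= beta -> beta < alpha ->
    ~ (forall i : nat, Pseq beta i = Pseq alpha i).

(* Main.v *)
Require Import Defs.
From HB Require Import structures.
From mathcomp Require Import all_boot all_order all_algebra.
From mathcomp Require Import reals.
From mathcomp Require Import ring lra zify.
From Stdlib Require Import Classical.
Import Order.TTheory GRing.Theory Num.Theory.
Local Open Scope ring_scope.
Set Implicit Arguments. Unset Strict Implicit.

Section Basic.
Variable R : realType.
Variable alpha : R.
Hypothesis ha : 1 <= alpha.

Local Notation P := (Pseq alpha).
Local Notation PL := (P_list alpha).

Lemma size_PL n : size (PL n) = n.+2.
Proof. by elim: n => [//|n IH] /=; rewrite /P_step size_rcons IH. Qed.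

Lemma PL_prefix {n m i} : (n <= m)%N -> (i < n.+2)%N ->
  nth 0%N (PL m) i = nth 0%N (PL n) i.
Proof.
move=> nm hi; elim: m nm => [|m IH]; first by rewrite leqn0 => /eqP->.
rewrite leq_eqVlt => /orP[/eqP->//|]; rewrite ltnS => nm.
rewrite /= /P_step nth_rcons size_PL -IH //.
by have -> : (i < m.+2)%N by apply: (leq_trans hi); rewrite ltnS.
Qed.

Lemma PL_nth n i : (i < n.+2)%N -> nth 0%N (PL n) i = P i.
Proof.
move=> hi; rewrite /Pseq -(PL_prefix (leq_maxl n i) hi).
by rewrite (PL_prefix (leq_maxr n i)) // ltnS.
Qed.

Lemma P0 : P 0 = 0%N. Proof. by []. Qed.
Lemma P1 : P 1 = 1%N. Proof. by rewrite /Pseq /P_list /P_step nth_rcons. Qed.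

Definition J k := P_index alpha (PL k.-1).

Lemma J_spec k : (0 < k)%N -> (0 < P k)%N ->
  [/\ (0 < J k)%N, (J k <= k)%N, alpha * (P (J k).-1)%:R < (P k)%:R,
      (P k)%:R <= alpha * (P (J k))%:R & P k.+1 = (P k + P (J k))%N].
Proof.
case: k => [//|k] _ Pk.
set s := PL k.
have ss : size s = k.+2 by rewrite size_PL.
have ns i : (i <= k.+1)%N -> nth 0%N s i = P i by move=> hi; rewrite PL_nth.
set a := (fun j => (alpha * (nth 0%N s j.-1)%:R < (nth 0%N s k.+1)%:R) &&
                  ((nth 0%N s k.+1)%:R <= alpha * (nth 0%N s j)%:R)).
have hJ : J k.+1 = (find a (iota 1 k.+1)).+1.
  by rewrite /J /P_index ss.
have has_a : has a (iota 1 k.+1).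
  apply/negPn/negP => /hasPn H.
  have key : forall j, (j <= k.+1)%N -> alpha * (P j)%:R < (P k.+1)%:R.
    elim=> [|j IHj] hj; first by rewrite P0 mulr0 ltr0n.
    have := H j.+1; rewrite mem_iota /= add1n ltnS hj => /(_ isT).
    rewrite /a /= !ns ?(ltnW hj) // IHj ?(ltnW hj) //= -ltNge => //.
  have := key _ (leqnn _).
  have : (P k.+1)%:R <= alpha * (P k.+1)%:R :> R.
    by rewrite ler_peMl // ler0n.
  by move=> h1 h2; have := le_lt_trans h1 h2; rewrite ltxx.
have fl : (find a (iota 1 k.+1) < k.+1)%N by have := has_find a (iota 1 k.+1); rewrite size_iota has_a.
have := nth_find 0%N has_a; rewrite nth_iota // add1n -hJ /a.
have Jle : (J k.+1 <= k.+1)%N by rewrite hJ.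
rewrite !ns ?Jle ?(leq_trans (leq_pred _) Jle) // => /andP[h1 h2].
have J0 : (0 < J k.+1)%N by rewrite hJ.
split => //.
rewrite -(@PL_nth k.+1) //.
have -> : PL k.+1 = P_step alpha s by [].
rewrite /P_step nth_rcons ss ltnn eqxx /=.
have -> : P_index alpha s = J k.+1 by [].
by rewrite !ns.
Qed.

Lemma P_pos k : (0 < k)%N -> (0 < P k)%N.
Proof.
elim: k => [//|k IH] _; case: k IH => [|k] IH; first by rewrite P1.
have [_ _ _ _ ->] := @J_spec k.+1 isT (IH isT).
by rewrite ltn_addr // IH.
Qed.

Lemma JP k : (0 < k)%N ->
  [/\ (0 < J k)%N, (J k <= k)%N, alpha * (P (J k).-1)%:R < (P k)%:R,
      (P k)%:R <= alpha * (P (J k))%:R & P k.+1 = (P k + P (J k))%N].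
Proof. by move=> k0; apply: J_spec => //; apply: P_pos. Qed.

Lemma P_ltS k : (P k < P k.+1)%N.
Proof.
case: k => [|k]; first by rewrite P0 P1.
have [J0 _ _ _ ->] := @JP k.+1 isT.
by rewrite -{1}(addn0 (P k.+1)) ltn_add2l P_pos.
Qed.

Lemma P_lt i j : (i < j)%N -> (P i < P j)%N.
Proof.
elim: j => [//|j IH]; rewrite ltnS leq_eqVlt => /orP[/eqP->|h].
  exact: P_ltS.
exact: ltn_trans (IH h) (P_ltS j).
Qed.

Lemma P_le i j : (i <= j)%N -> (P i <= P j)%N.
Proof. by rewrite leq_eqVlt => /orP[/eqP->//|/P_lt/ltnW]. Qed.


Lemma alpha_gt0 : 0 < alpha.
Proof. exact: lt_le_trans ltr01 ha. Qed.

Lemma J_step k : (0 < k)%N -> (J k.+1 <= (J k).+1)%N.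
Proof.
move=> k0; have [j0 jk h1 h2 hk] := JP k0.
have [j0' jk' h1' h2' hk'] := JP (isT : (0 < k.+1)%N).
have [jj0 jjk hj1 hj2 hj] := JP j0.
have : (P (J k.+1).-1)%:R < (P (J k).+1)%:R :> R.
  rewrite -(ltr_pM2l alpha_gt0); apply: (lt_le_trans h1').
  rewrite hk hj !natrD mulrDr; apply: lerD => //.
rewrite ltr_nat => H.
have : ((J k.+1).-1 < (J k).+1)%N.
  by rewrite ltnNge; apply/negP => /P_le; rewrite leqNgt H.
by case: (J k.+1) j0'.
Qed.

Lemma growth j m : (0 < j)%N ->
  (alpha + m%:R) * (P j)%:R <= alpha * (P (j + m))%:R.
Proof.
move=> j0; elim: m => [|m IH]; first by rewrite addr0 addn0.
have jm0 : (0 < j + m)%N by rewrite ltn_addr.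
have [_ _ _ h2 hk] := JP jm0.
rewrite addnS hk natrD mulrDr -addn1 natrD addrA mulrDl mul1r.
apply: lerD => //; apply: le_trans h2; rewrite ler_nat; apply: P_le.
exact: leq_addr.
Qed.

Lemma d_bound : exists N, forall k, (0 < k)%N -> (k - J k < N)%N.
Proof.
exists (Num.truncn (alpha ^+ 2)).+1 => k k0.
have [j0 jk h1 h2 hk] := JP k0.
have := growth (k - J k) j0; rewrite subnKC //.
move=> G.
have Pj : 0 < (P (J k))%:R :> R by rewrite ltr0n P_pos.
have : (alpha + (k - J k)%:R) * (P (J k))%:R <= alpha ^+ 2 * (P (J k))%:R.
  apply: (le_trans G); rewrite expr2 -mulrA ler_wpM2l // ltW // alpha_gt0.
  done.
rewrite (ler_pM2r Pj) => H.
rewrite -(ltr_nat R); apply: le_lt_trans (truncnS_gt _).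
apply: le_trans H; by rewrite lerDr ltW // alpha_gt0.
Qed.

Definition dd k := (k - J k)%N.

Lemma dd_mono K k : (0 < K)%N -> (K <= k)%N -> (dd K <= dd k)%N.
Proof.
move=> K0; elim: k => [|k IH]; first by rewrite leqn0 => /eqP ->.
rewrite leq_eqVlt => /orP[/eqP->//|]; rewrite ltnS => Kk.
apply: (leq_trans (IH Kk)).
have k0 : (0 < k)%N by apply: leq_trans Kk.
have := J_step k0; have [_ jk _ _ _] := JP k0; rewrite /dd; lia.
Qed.

Lemma eventually : exists K, (0 < K)%N /\ forall k, (K <= k)%N -> J k.+1 = (J k).+1.
Proof.
have [K [K0 HK]] : exists K, (0 < K)%N /\ forall k, (K <= k)%N -> dd k = dd K.
  apply: NNPP => H.
  have grow : forall n, exists K, (0 < K)%N /\ (n <= dd K)%N.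
    elim=> [|n [K [K0 HK]]]; first by exists 1%N.
    apply: NNPP => H2; apply: H; exists K; split => // k Kk.
    have := dd_mono K0 Kk; rewrite leq_eqVlt => /orP[/eqP->//|Hlt].
    by exfalso; apply: H2; exists k; split; [apply: leq_trans Kk | apply: leq_trans Hlt].
  have [N HN] := d_bound.
  have [K [K0 HK]] := grow N.
  by have := HN K K0; rewrite ltnNge HK.
exists K; split => // k Kk.
have k0 : (0 < k)%N by apply: leq_trans Kk.
have e1 := HK _ Kk; have e2 := HK k.+1 (leq_trans Kk (leqnSn k)).
have [_ jk _ _ _] := JP k0.
have [_ jk' _ _ _] := JP (isT : (0 < k.+1)%N).
move: e1 e2; rewrite /dd; lia.
Qed.

Lemma mediant (c : R) k : (0 < k)%N -> J k.+1 = (J k).+1 ->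
  (P k)%:R <= c * (P (J k))%:R -> (P (J k))%:R <= c * (P (J (J k)))%:R ->
  (P k.+1)%:R <= c * (P (J k.+1))%:R.
Proof.
move=> k0 e h1 h2; have [j0 _ _ _ hk] := JP k0.
have [_ _ _ _ hj] := JP j0.
by rewrite e hk hj !natrD mulrDr lerD.
Qed.


Lemma finite_c K : 1 < alpha ->
  (forall i, (0 < i)%N -> (i <= K)%N -> (P i)%:R < alpha * (P (J i))%:R) ->
  exists c : R, [/\ 1 <= c, c < alpha &
    forall i, (0 < i)%N -> (i <= K)%N -> (P i)%:R <= c * (P (J i))%:R].
Proof.
move=> a1; elim: K => [|K IH] H.
  by exists 1; split => // i i0; rewrite leqn0 => /eqP i0'; move: i0; rewrite i0'.
have [c [c1 ca Hc]] : exists c : R, [/\ 1 <= c, c < alpha &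
    forall i, (0 < i)%N -> (i <= K)%N -> (P i)%:R <= c * (P (J i))%:R].
  by apply: IH => i i0 iK; apply: H => //; apply: leq_trans iK _.
have K0 : (0 < K.+1)%N by [].
have [j0 _ _ _ _] := JP K0.
have Pj : 0 < (P (J K.+1))%:R :> R by rewrite ltr0n P_pos.
pose r : R := (P K.+1)%:R / (P (J K.+1))%:R.
exists (Num.max c r); split.
- by rewrite le_max c1.
- by rewrite gt_max ca /r ltr_pdivrMr // H.
- move=> i i0; rewrite leq_eqVlt => /orP[/eqP->|].
    apply: (@le_trans _ _ (r * (P (J K.+1))%:R)).
      by rewrite /r mulfVK // gt_eqF.
    by rewrite ler_wpM2r ?ler0n // le_max lexx orbT.
  rewrite ltnS => iK; apply: le_trans (Hc _ i0 iK) _.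
  by rewrite ler_wpM2r ?ler0n // le_max lexx.
Qed.

Lemma all_bound (c : R) K : (0 < K)%N ->
  (forall k, (K <= k)%N -> J k.+1 = (J k).+1) ->
  (forall i, (0 < i)%N -> (i <= K)%N -> (P i)%:R <= c * (P (J i))%:R) ->
  forall k, (0 < k)%N -> (P k)%:R <= c * (P (J k))%:R.
Proof.
move=> K0 HK Hi.
suff: forall n k, (0 < k)%N -> (k <= n)%N -> (P k)%:R <= c * (P (J k))%:R.
  by move=> S k k0; apply: (S k).
elim=> [|n IH] k k0 kn; first by move: k0; rewrite lt0n -leqn0 kn.
case: (leqP n.+1 K) => nK; first by apply: Hi => //; apply: leq_trans nK.
move: kn; rewrite leq_eqVlt => /orP[/eqP->|]; last by rewrite ltnS; apply: IH.
have n0 : (0 < n)%N by exact: leq_trans K0 nK.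
have [j0 jn _ _ _] := JP n0.
apply: mediant => //; first by apply: HK; rewrite -ltnS.
- exact: IH.
- exact: IH.
Qed.

End Basic.

Lemma same_seq (R : realType) (alpha c : R) : 1 <= alpha -> 0 <= c -> c <= alpha ->
  (forall k, (0 < k)%N -> (Pseq alpha k)%:R <= c * (Pseq alpha (J alpha k))%:R) ->
  forall n, P_list c n = P_list alpha n.
Proof.
move=> ha c0 ca Hb; elim=> [//|n IH].
rewrite /= IH /P_step; congr (rcons _ (_ + nth _ _ _)%N).
rewrite /P_index size_PL [(n.+2).-1]/=; congr S; apply: eq_in_find => j.
rewrite mem_iota => /andP[j1 j2]; rewrite add1n ltnS in j2.
rewrite !PL_nth ?ltnS ?(leq_trans (leq_pred _) j2) ?(ltnW j2) //.
have [J0 Jk h1 h2 _] := JP ha (isT : (0 < n.+1)%N).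
have le1 x : 0 <= (x%:R : R) by rewrite ler0n.
have cle x : c * (x%:R : R) <= alpha * x%:R by rewrite ler_wpM2r.
have a0 : 0 <= alpha by exact: le_trans ler01 ha.
case: (ltngtP j (J alpha n.+1)) => hj.
- have hP : (Pseq alpha j <= Pseq alpha (J alpha n.+1).-1)%N.
    by apply: P_le; case: (J alpha n.+1) hj J0.
  have ha' : alpha * (Pseq alpha j)%:R < (Pseq alpha n.+1)%:R.
    by apply: le_lt_trans h1; rewrite ler_wpM2l ?ler_nat.
  have hc' : c * (Pseq alpha j)%:R < (Pseq alpha n.+1)%:R := le_lt_trans (cle _) ha'.
  by rewrite [_ <= alpha * _]leNgt ha' [_ <= c * _]leNgt hc' !andbF.
- have hP : (Pseq alpha (J alpha n.+1) <= Pseq alpha j.-1)%N.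
    by apply: P_le; case: j hj j1 {j2}.
  have ga : (Pseq alpha n.+1)%:R <= alpha * (Pseq alpha j.-1)%:R.
    by apply: (le_trans h2); rewrite ler_wpM2l ?ler_nat.
  have gc : (Pseq alpha n.+1)%:R <= c * (Pseq alpha j.-1)%:R.
    by apply: (le_trans (Hb n.+1 isT)); rewrite ler_wpM2l ?ler_nat.
  by rewrite [alpha * _ < _]ltNge ga [c * _ < _]ltNge gc.
- rewrite hj h1 h2 (Hb n.+1 isT) andbT.
  exact: le_lt_trans (cle _) h1.
Qed.

Theorem mainTheorem8 (R : realType) (alpha : R) :
  cutoff alpha -> exists q : rat, alpha = ratr q.
Proof.
move=> [ha Hcut].
case: (classic (exists i, (0 < i)%N /\
   (Pseq alpha i)%:R = alpha * (Pseq alpha (J alpha i))%:R)).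
  case=> i [i0 e].
  have [j0 _ _ _ _] := JP ha i0.
  have Pj : (Pseq alpha (J alpha i))%:R != 0 :> R by rewrite gt_eqF // ltr0n P_pos.
  exists ((Pseq alpha i)%:R / (Pseq alpha (J alpha i))%:R).
  by rewrite fmorph_div !rmorph_nat e mulfK.
move=> Hne.
case: (eqVneq alpha 1) => [->|a1']; first by exists 1; rewrite rmorph1.
have a1 : 1 < alpha by rewrite lt_neqAle eq_sym a1' ha.
have [K [K0 HK]] := eventually ha.
have Hs : forall i, (0 < i)%N -> (i <= K)%N ->
    (Pseq alpha i)%:R < alpha * (Pseq alpha (J alpha i))%:R.
  move=> i i0 _; have [_ _ _ h2 _] := JP ha i0.
  rewrite lt_neqAle h2 andbT; apply/eqP => e; apply: Hne; exists i; split => //.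
have [c [c1 ca Hc]] := finite_c ha a1 Hs.
have Hall := all_bound ha K0 HK Hc.
have same := same_seq ha (le_trans ler01 c1) (ltW ca) Hall.
by exfalso; apply: (Hcut c c1 ca) => i; rewrite /Pseq same.
Qed.
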